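(* Let $f=a_0+ a_{1}z+\cdots+a_m z^m\in \mathbb{Z}[z]$ be primitive (the greatest common divisor of its coefficients is $1$). Suppose there exist positive real numbers $\alpha<\beta$ and an index $j\in \{0,1,\ldots,m\}$ such that \[ |a_j|\alpha^j >\left(\frac{\beta}{\alpha}\right)^{m-j}\sum_{i=0,\, i\neq j}^{m} |a_i|\alpha^i. \] If there exist natural numbers $n$ and $d$ with $\beta-d\geq n\geq \alpha+d$ such that either $|f(n)|/d$ is a prime, or $|f(n)|/d$ is a prime power coprime to $|f'(n)|$, then $f$ is irreducible in $\mathbb{Z}[z]$.
   Context: $f'$ denotes the derivative of $f$. Natural numbers are positive integers. *)

(* Defs.v *)
From HB Require Import structures.
From mathcomp Require Import all_boot all_order all_algebra.
From mathcomp Require Export reals.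
Set Implicit Arguments. Unset Strict Implicit. Unset Printing Implicit Defensive.
Import Order.TTheory GRing.Theory Num.Theory.
Local Open Scope ring_scope.

Definition primitive (f : {poly int}) : Prop :=
  (\big[gcdn/0%N]_(i < size f) absz (f`_i)%R)%N = 1%N.

Definition irreducible_Zz (f : {poly int}) : Prop :=
  f != 0 /\ f \isn't a GRing.unit /\
  forall g h : {poly int}, f = g * h -> g \is a GRing.unit \/ h \is a GRing.unit.

Definition prime_power (q : nat) : Prop :=
  exists p k : nat, prime p /\ (0 < k)%N /\ q = (p ^ k)%N.

(* Main.v *)
Require Import Defs.
From HB Require Import structures.
From mathcomp Require Import all_boot all_order all_algebra.
From mathcomp Require Import reals.
From mathcomp Require Import complex ring lra zify.
Import Order.TTheory GRing.Theory Num.Theory.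
Local Open Scope ring_scope.


Lemma stepA (R : realType) (a : nat -> R) (m j : nat) (alpha beta r : R) :
  0 < alpha -> alpha <= r -> r <= beta -> (j <= m)%N -> (forall i, 0 <= a i) ->
  (beta/alpha)^+(m-j) * \sum_(i < m.+1 | (i : nat) != j) a i * alpha^+i < a j * alpha^+j ->
  \sum_(i < m.+1 | (i : nat) != j) a i * r^+i < a j * r^+j.
Proof.
move=> a0 ar rb jm ai H.
have r0 : 0 < r by apply: lt_le_trans ar.
set x := r / alpha; set y := beta / alpha.
have x1 : 1 <= x by rewrite /x ler_pdivlMr // mul1r.
have xy : x <= y by rewrite /x /y ler_pM2r // invr_gt0.
have y1 : 1 <= y by apply: le_trans xy.
have x0 : 0 <= x by apply: le_trans x1.
have rE : r = alpha * x by rewrite /x mulrC divfK // gt_eqF.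
have key : forall i, (i <= m)%N -> x ^+ i <= x ^+ j * y ^+ (m - j).
  move=> i im; case: (leqP i j) => ij.
    apply: le_trans (ler_weXn2l x1 ij) _.
    by rewrite ler_peMr ?exprn_ege1 ?exprn_ge0.
  rewrite -(subnKC (ltnW ij)) exprD ler_wpM2l ?exprn_ge0 //.
  apply: le_trans (ler_weXn2l y1 (_ : (i - j <= m - j)%N)); last by rewrite leq_sub2r.
  by apply: lerXn2r; rewrite ?nnegrE // (le_trans x0 xy).
set K := x ^+ j * y ^+ (m - j).
have step : \sum_(i < m.+1 | (i : nat) != j) a i * r^+i <=
   K * \sum_(i < m.+1 | (i : nat) != j) a i * alpha^+i.
  rewrite mulr_sumr; apply: ler_sum => i _.
  rewrite rE exprMn [K * _]mulrC !mulrA -(mulrA _ (x ^+ j)); apply: ler_wpM2l; first by rewrite ?mulr_ge0 ?exprn_ge0 ?(ltW a0).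
  by apply: key; rewrite -ltnS.
apply: le_lt_trans step _.
have -> : a j * r ^+ j = x ^+ j * (a j * alpha ^+ j) by rewrite rE exprMn; ring.
rewrite /K -mulrA ltr_pM2l // exprn_gt0 //.
by apply: lt_le_trans x1.
Qed.

Lemma stepB (R : realType) (f : {poly int}) (m j : nat) (z : R[i]) (r : R) :
  size f = m.+1 -> (j <= m)%N ->
  `|z| = (r%:C)%C ->
  \sum_(i < m.+1 | (i : nat) != j) `|f`_i|%:~R * r^+i < `|f`_j|%:~R * r^+j ->
  (map_poly (intr : int -> R[i]) f).[z] != 0.
Proof.
move=> sf jm Hz H; apply/negP => /eqP H0.
have jlt : (j < m.+1)%N by [].
have E : forall i, ((`|f`_i|%:~R : R) * r ^+ i)%:C%C = `|(f`_i)%:~R * z ^+ i| :> R[i].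
  by move=> i; rewrite rmorphM rmorphXn /= rmorph_int normrM normrX Hz intr_norm.
move: H0; rewrite horner_coef size_map_inj_poly ?sf; last 2 first.
- exact: intr_inj.
- by [].
rewrite (bigD1 (Ordinal jlt)) //= coef_map /=.
rewrite (eq_bigl (fun i : 'I_m.+1 => (i : nat) != j)); last by move=> i.
move/eqP; rewrite addr_eq0 => /eqP Ej.
have : `|(f`_j)%:~R * z ^+ j| <= \sum_(i < m.+1 | (i : nat) != j) `|(f`_i)%:~R * z ^+ i| :> R[i].
  rewrite Ej normrN; apply: le_trans (ler_norm_sum _ _ _) _.
  by apply: ler_sum => i _; rewrite coef_map.
rewrite -E; under eq_bigr do rewrite -E.
rewrite -rmorph_sum lecR => H'.
by move: (lt_le_trans H H'); rewrite ltxx.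
Qed.


Lemma int_norm_ge1 (l : int) : l != 0 -> 1 <= `|l|.
Proof. by case: l => // -[]. Qed.

Lemma prod_gt (T : numDomainType) (I : eqType) (s : seq I) (F : I -> T) (d : T) :
  1 <= d -> s != [::] -> (forall z, z \in s -> d < F z) -> d < \prod_(z <- s) F z.
Proof.
move=> d1; elim: s => // a s IH _ H.
rewrite big_cons.
have Ha : d < F a by apply: H; rewrite mem_head.
case: s IH H => [|b s] IH H; first by rewrite big_nil mulr1.
have IH' : d < \prod_(z <- b :: s) F z.
  by apply: IH => // z zs; apply: H; rewrite in_cons zs orbT.
apply: (lt_le_trans IH'); apply: ler_peMl.
  by apply: le_trans (ltW IH'); apply: le_trans d1.
exact: ltW (le_lt_trans d1 Ha).
Qed.

Lemma stepC (R : realType) (g : {poly int}) (x : R[i]) (d : nat) :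
  (1 < size g)%N -> (1 <= d)%N ->
  (forall z, root (map_poly (intr : int -> R[i]) g) z -> d%:R < `|x - z|) ->
  d%:R < `|(map_poly (intr : int -> R[i]) g).[x]|.
Proof.
move=> sg d1 Hr.
set gC := map_poly _ g.
have sgC : size gC = size g by rewrite size_map_inj_poly //; exact: intr_inj.
have [rs Hrs] := closed_field_poly_normal gC.
have lC : lead_coef gC = (lead_coef g)%:~R by rewrite lead_coef_map_inj //; exact: intr_inj.
have g0 : g != 0 by rewrite -size_poly_gt0 (ltn_trans _ sg).
have l1 : 1 <= `|lead_coef gC|.
  by rewrite lC -intr_norm ler1z int_norm_ge1 // lead_coef_eq0.
have rs0 : rs != [::].
  apply/negP => /eqP rsE; move: sg; rewrite -sgC Hrs rsE big_nil alg_polyC.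
  by rewrite ltnNge size_polyC_leq1.
rewrite Hrs hornerZ horner_prod normrM normr_prod.
apply: lt_le_trans (ler_peMl _ l1); last by apply: prodr_ge0 => *.
apply: prod_gt => //; first by rewrite ler1n.
move=> z zs; rewrite hornerXsubC; apply: Hr.
by rewrite -/gC /root Hrs hornerZ; move: (root_prod_XsubC rs z); rewrite zs /root => /eqP ->; rewrite mulr0.
Qed.

Lemma stepD0 (A B d q : nat) : (0 < d)%N -> (q * d = A * B)%N -> (d < A)%N -> (d < B)%N ->
  (q %| A)%N -> False.
Proof.
move=> d0 E dA dB /dvdnP[u Hu]; rewrite Hu in E dA.
have q0 : (0 < q)%N by rewrite lt0n; apply/negP => /eqP q0; move: dA; rewrite q0 muln0.
have : d = (u * B)%N.
  by apply/eqP; rewrite -(eqn_pmul2l q0) E; apply/eqP; rewrite mulnCA mulnA.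
move=> dE; have u0 : (0 < u)%N.
  by rewrite lt0n; apply/negP => /eqP u0; move: d0; rewrite dE u0.
by move: dB; rewrite dE ltnNge leq_pmull.
Qed.

Lemma stepD (A B d q : nat) : (0 < d)%N -> (q * d = A * B)%N -> (d < A)%N -> (d < B)%N ->
  (q %| A)%N || (q %| B)%N -> False.
Proof.
move=> d0 E dA dB /orP[]; first exact: stepD0 E dA dB.
move=> qB; apply: (stepD0 _ _ _ _ d0 _ dB dA qB); by rewrite E mulnC.
Qed.

Lemma no_small (q : nat) (P : Prop) : (q <= 1)%N -> prime q \/ (prime_power q /\ P) -> False.
Proof.
move=> q1 [pq|[[p [k [pp [k0 qE]]]] _]].
  by move: (prime_gt1 pq); rewrite ltnNge q1.
have p1 := prime_gt1 pp.
have : (p <= q)%N by rewrite qE -{1}(expn1 p) leq_pexp2l // ltnW.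
lia.
Qed.

Lemma const_unit (f h : {poly int}) (c : int) :
  primitive f -> f = c%:P * h -> c%:P \is a GRing.unit.
Proof.
move=> prim E.
have : (absz c %| 1)%N.
  rewrite -prim; apply/dvdn_biggcdP => i _.
  by move: (nat_of_ord i) => k; rewrite E coefCM abszM dvdn_mulr.
rewrite dvdn1 => /eqP c1.
rewrite poly_unitE coefC /= size_polyC.
case: c c1 {E} => [[|[|]]|[|]] //= _.
Qed.

Theorem corollary6 (R : realType) (f : {poly int}) (alpha beta : R) (j n d : nat) :
  primitive f ->
  0 < alpha -> alpha < beta ->
  (j <= (size f).-1)%N ->
  (`|f`_j|%:~R * alpha ^+ j >
     (beta / alpha) ^+ ((size f).-1 - j) *
     \sum_(i < (size f).-1.+1 | (i : nat) != j) `|f`_i|%:~R * alpha ^+ i) ->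
  (0 < n)%N -> (0 < d)%N ->
  beta - d%:R >= n%:R -> n%:R >= alpha + d%:R ->
  (d %| (absz f.[n%:Z]))%N ->
  (prime ((absz f.[n%:Z]) %/ d) \/
   (prime_power ((absz f.[n%:Z]) %/ d) /\ coprime ((absz f.[n%:Z]) %/ d) (absz (f^`()).[n%:Z]))) ->
  irreducible_Zz f.
Proof.
move=> prim a0 ab jm H n0 d0 Hbn Han dvd Hq.
set m := (size f).-1 in jm H.
have f0 : f != 0.
  apply/negP => /eqP f0; move: H; rewrite f0 coef0 normr0 mul0r big1 ?mulr0 ?ltxx //.
  by move=> i _; rewrite coef0 normr0 mul0r.
have sf : size f = m.+1 by rewrite /m prednK // size_poly_gt0.
set fC := map_poly (intr : int -> R[i]) f.
have Hann : forall z : R[i], root fC z -> forall r : R, `|z| = (r%:C)%C -> r < alpha \/ beta < r.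
  move=> z rz r Hz; case: (ltP r alpha) => ra; first by left.
  case: (ltP beta r) => rb; first by right.
  exfalso; move: rz; apply/negP.
  apply: (stepB _ _ _ _ _ _ sf jm Hz).
  apply: (stepA _ (fun i => (`|f`_i|%:~R : R)) _ _ _ _ _ a0 ra rb jm _ H).
  by move=> i /=; rewrite ler0z.
have nC : (n%:R : R[i]) = ((n%:R : R)%:C)%C by rewrite rmorph_nat.
have dC : (d%:R : R[i]) = ((d%:R : R)%:C)%C by rewrite rmorph_nat.
have Hdist : forall z : R[i], root fC z -> d%:R < `|n%:R - z|.
  move=> z rz; have /complex_realP [r Hr] := normr_real z.
  case: (Hann z rz r Hr) => Hr'.
    apply: (lt_le_trans _ (lerB_dist _ _)).
    by rewrite normr_nat Hr nC dC -rmorphB ltcR; lra.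
  rewrite distrC; apply: (lt_le_trans _ (lerB_dist _ _)).
  by rewrite normr_nat Hr nC dC -rmorphB ltcR; lra.
have Hbig : forall g : {poly int}, (1 < size g)%N ->
    (forall z, root (map_poly (intr : int -> R[i]) g) z -> root fC z) -> (d < absz g.[n%:Z])%N.
  move=> g sg Hg.
  have := stepC _ _ (n%:R) _ sg d0 (fun z rz => Hdist z (Hg z rz)).
  rewrite (_ : (n%:R : R[i]) = (n%:Z)%:~R) // horner_map /= -intr_norm -abszE.
  by rewrite -[d%:R]/((d%:Z)%:~R) ltr_int ltz_nat.
have m1 : (0 < m)%N.
  rewrite lt0n; apply/negP => /eqP m0.
  have sf1 : (size f <= 1)%N by rewrite sf m0.
  have fE := size1_polyC sf1.
  have c1 : absz f`_0 = 1%N.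
    by move: prim; rewrite /primitive sf m0 big_ord1.
  apply: (no_small _ _ _ Hq).
  rewrite fE hornerC c1; exact: leq_div.
split => //; split.
  by rewrite poly_unitE sf /= -(prednK m1).
move=> g h E.
have g0 : g != 0 by apply/negP => /eqP g0; move: f0; rewrite E g0 mul0r eqxx.
have h0 : h != 0 by apply/negP => /eqP h0; move: f0; rewrite E h0 mulr0 eqxx.
case: (ltnP 1 (size g)) => sg; last first.
  left; rewrite (size1_polyC sg); apply: (const_unit _ _ _ prim).
  by rewrite E {1}(size1_polyC sg).
case: (ltnP 1 (size h)) => sh; last first.
  right; rewrite (size1_polyC sh); apply: (const_unit _ _ _ prim).
  by rewrite E {1}(size1_polyC sh) mulrC.
exfalso.
have fCE : fC = map_poly (intr : int -> R[i]) g * map_poly (intr : int -> R[i]) h.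
  by rewrite /fC E rmorphM.
have dA := Hbig g sg (fun z rz => ltac:(by rewrite fCE rootM rz)).
have dB := Hbig h sh (fun z rz => ltac:(by rewrite fCE rootM rz orbT)).
set A := absz g.[n%:Z] in dA; set B := absz h.[n%:Z] in dB.
have Ef : absz f.[n%:Z] = (A * B)%N by rewrite E hornerM abszM.
rewrite Ef in dvd Hq.
set q := ((A * B) %/ d)%N in Hq.
have Eq : (q * d = A * B)%N by rewrite /q divnK.
case: Hq => [pq|[[p [k [pp [k0 qE]]]] cop]].
  apply: (stepD _ _ _ _ d0 Eq dA dB); rewrite -Euclid_dvdM // -Eq dvdn_mulr //.
have pq : (p %| q)%N by rewrite qE dvdn_exp.
have pAB : (p %| A * B)%N by rewrite -Eq dvdn_mulr.
case: (boolP (p %| A)%N) => pA; case: (boolP (p %| B)%N) => pB.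
- have pF : (p %| absz (f^`()).[n%:Z])%N.
    have pA' : (p%:Z %| g.[n%:Z])%Z by rewrite dvdzE.
    have pB' : (p%:Z %| h.[n%:Z])%Z by rewrite dvdzE.
    rewrite -[p]/(absz p%:Z) -dvdzE E derivM hornerD !hornerM.
    by apply: rpredD; [apply: dvdz_mull | apply: dvdz_mulr].
  have : (p %| gcdn q (absz (f^`()).[n%:Z]))%N by rewrite dvdn_gcd pq pF.
  by move: cop; rewrite /coprime => /eqP ->; rewrite dvdn1 => /eqP p1; move: pp; rewrite p1.
- apply: (stepD _ _ _ _ d0 Eq dA dB); apply/orP; left.
  rewrite -(@Gauss_dvdl _ _ B) -?Eq ?dvdn_mulr //.
  by rewrite qE coprimeXl // prime_coprime.
- apply: (stepD _ _ _ _ d0 Eq dA dB); apply/orP; right.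
  rewrite -(@Gauss_dvdr _ A) -?Eq ?dvdn_mulr //.
  by rewrite qE coprimeXl // prime_coprime.
- by move: pAB; rewrite Euclid_dvdM // (negPf pA) (negPf pB).
Qed.
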